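(* Let $n,d,r$ be positive integers with $r\le d\le n$. Let $F\in\mathbb{R}^{d\times n}$ have rank $d$, with compact SVD $F=U_F\Sigma_F V_F^\top$ ($V_F\in\mathbb{R}^{n\times d}$ with orthonormal columns), and suppose $\max_{i}\|e_i^\top V_F\|_2\le \mu\sqrt{d/n}$; let $\kappa=\sigma_{\max}(F)/\sigma_{\min}(F)$. Let $W^*\in\mathbb{R}^{d\times d}$ be symmetric of rank $r$ with $\|W^*\|_2\le c_W$, $L^*=F^\top W^*F$, let $S^*\in\mathbb{R}^{n\times n}$ be symmetric with at most $z$ nonzero entries per row and per column, $z\le n/(20\mu^2d\kappa)$, and let $N^*\in\mathbb{R}^{n\times n}$ be symmetric with $\|N^*\|_\infty\le1/(40\mu^2d\kappa^2)$. Let $M=L^*+S^*+N^*$. Let $t\ge1$ be an integer, let $\zeta_t=\mu^2\sigma_{\max}^2(F)\frac{d}{n}\frac{c_W}{5^{t-1}}+(3\mu^2d\kappa^2+1)\|N^*\|_\infty$, and let $L_{t-1}\in\mathbb{R}^{n\times n}$ satisfy $\|L^*-L_{t-1}\|_\infty\le\mu^2\sigma_{\max}^2(F)\frac{d}{n}\frac{c_W}{5^{t-1}}+3\mu^2d\kappa^2\|N^*\|_\infty$. Define $S_t=\mathcal{P}_{\zeta_t}(M-L_{t-1})$. Then $\|S^*-S_t\|_\infty\le2\mu^2\sigma_{\max}^2(F)\frac{d}{n}\frac{c_W}{5^{t-1}}+2(3\mu^2d\kappa^2+1)\|N^*\|_\infty$ and $\operatorname{Supp}(S_t)\subseteq\operatorname{Supp}(S^*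 )$.
   Context: $e_i$ is the $i$-th standard basis vector; $\sigma_{\max}(F),\sigma_{\min}(F)$ are the largest and smallest of the $d$ singular values of $F$. $\|A\|_\infty=\max_{i,j}|A_{ij}|$, $\|A\|_2$ is the spectral norm, $\operatorname{Supp}(A)$ is the set of indices of nonzero entries. For $a\ge0$, $\mathcal{P}_a(A)$ is entrywise hard thresholding: $(\mathcal{P}_a(A))_{ij}=A_{ij}$ if $|A_{ij}|>a$ and $0$ otherwise. *)

(* Defs.v *)
From HB Require Import structures.
From mathcomp Require Import all_boot all_order all_algebra.
From mathcomp Require Import classical_sets reals.
Set Implicit Arguments. Unset Strict Implicit. Unset Printing Implicit Defensive.
Import Order.TTheory GRing.Theory Num.Theory.
Local Open Scope ring_scope.
Local Open Scope classical_set_scope.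

Section Defs.
Variable R : realType.

Definition cnorm2 (m : nat) (x : 'cV[R]_m) : R :=
  Num.sqrt (\sum_(i < m) (x i 0) ^+ 2).

Definition rnorm2 (m : nat) (x : 'rV[R]_m) : R :=
  Num.sqrt (\sum_(j < m) (x 0 j) ^+ 2).

Definition spec_norm (m n : nat) (A : 'M[R]_(m, n)) : R :=
  sup [set e | exists x : 'cV[R]_n, cnorm2 x <= 1 /\ e = cnorm2 (A *m x)].

Definition max_norm (m n : nat) (A : 'M[R]_(m, n)) : R :=
  \big[Num.max/0]_(i < m) \big[Num.max/0]_(j < n) `|A i j|.

Definition hard_thr (m n : nat) (a : R) (A : 'M[R]_(m, n)) : 'M[R]_(m, n) :=
  \matrix_(i, j) (if a < `|A i j| then A i j else 0).

Definition supp (m n : nat) (A : 'M[R]_(m, n)) : set ('I_m * 'I_n) :=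
  [set ij | A ij.1 ij.2 != 0].

Definition compact_svd (d n : nat) (F : 'M[R]_(d, n)) (U : 'M[R]_d)
  (s : 'rV[R]_d) (V : 'M[R]_(n, d)) : Prop :=
  [/\ U^T *m U = 1%:M, V^T *m V = 1%:M, (forall i, 0 < s 0 i) &
      F = U *m diag_mx s *m V^T].

Definition sv_max (d : nat) (s : 'rV[R]_d) : R := \big[Num.max/0]_(i < d) s 0 i.
Definition sv_min (d : nat) (s : 'rV[R]_d) : R :=
  \big[Num.min/sv_max s]_(i < d) s 0 i.

End Defs.

(* Main.v *)
Require Import Defs.
From HB Require Import structures.
From mathcomp Require Import all_boot all_order all_algebra.
From mathcomp Require Import classical_sets reals.
Import Order.TTheory GRing.Theory Num.Theory.
Local Open Scope ring_scope.
Local Open Scope classical_set_scope.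
From mathcomp Require Import ring lra.

Lemma le_bmax (R : realType) (I : finType) (F : I -> R) i :
  F i <= \big[Num.max/0]_(j : I) F j.
Proof.
have : i \in index_enum I by rewrite mem_index_enum.
elim: (index_enum I) => // a s IH.
rewrite inE big_cons => /orP[/eqP->|/IH H]; rewrite le_max ?lexx //.
by rewrite H orbT.
Qed.

Arguments le_bmax {R I}.
Lemma bmax_le (R : realType) (I : finType) (F : I -> R) B :
  0 <= B -> (forall i, F i <= B) -> \big[Num.max/0]_(j : I) F j <= B.
Proof.
move=> B0 HB; elim/big_rec: _ => // j x _ Hx.
by rewrite ge_max Hx HB.
Qed.

Arguments bmax_le {R I}.
Lemma entry_le (R : realType) (n : nat) (A : 'M[R]_n) i j :
  `|A i j| <= max_norm A.
Proof.
rewrite /max_norm.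
have h1 := le_bmax (fun i => \big[Num.max/0]_(j < n) `|A i j|) i.
have h2 := le_bmax (fun j => `|A i j|) j.
exact: le_trans h2 h1.
Qed.

Arguments entry_le {R n}.
Theorem lemma3 (R : realType) (n d r : nat)
  (F : 'M[R]_(d, n)) (UF : 'M[R]_d) (sF : 'rV[R]_d) (VF : 'M[R]_(n, d))
  (mu cW : R) (z : nat)
  (Wst : 'M[R]_d) (Sst Nst Lprev : 'M[R]_n) (t : nat) :
  (0 < r)%N -> (r <= d)%N -> (d <= n)%N ->
  \rank F = d ->
  compact_svd F UF sF VF ->
  (forall i : 'I_n, rnorm2 (row i VF) <= mu * Num.sqrt (d%:R / n%:R)) ->
  let kappa := sv_max sF / sv_min sF in
  Wst^T = Wst -> \rank Wst = r -> spec_norm Wst <= cW ->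
  let Lst := F^T *m Wst *m F in
  Sst^T = Sst ->
  (forall i : 'I_n, (#|[set j : 'I_n | Sst i j != 0%R]%SET| <= z)%N) ->
  (forall j : 'I_n, (#|[set i : 'I_n | Sst i j != 0%R]%SET| <= z)%N) ->
  z%:R <= n%:R / (20 * mu ^+ 2 * d%:R * kappa) ->
  Nst^T = Nst ->
  max_norm Nst <= 1 / (40 * mu ^+ 2 * d%:R * kappa ^+ 2) ->
  let M := Lst + Sst + Nst in
  (1 <= t)%N ->
  let E := mu ^+ 2 * sv_max sF ^+ 2 * (d%:R / n%:R) * (cW / 5%:R ^+ t.-1) in
  let zeta := E + (3 * mu ^+ 2 * d%:R * kappa ^+ 2 + 1) * max_norm Nst in
  max_norm (Lst - Lprev) <= E + 3 * mu ^+ 2 * d%:R * kappa ^+ 2 * max_norm Nst ->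
  let St := hard_thr zeta (M - Lprev) in
  max_norm (Sst - St) <=
    2 * E + 2 * (3 * mu ^+ 2 * d%:R * kappa ^+ 2 + 1) * max_norm Nst
  /\ supp St `<=` supp Sst.
Proof.
move=> r0 rd dn _ _ _ kappa _ _ _ Lst _ _ _ _ _ _ M _ E zeta HL St.
set nu := max_norm Nst.
set c := 3 * mu ^+ 2 * d%:R * kappa ^+ 2.
have HL' : max_norm (Lst - Lprev) <= E + c * nu by [].
have key : forall i j, `|Sst i j - St i j| <= 2 * zeta /\ (St i j != 0 -> Sst i j != 0).
  move=> i j.
  have hD := le_trans (entry_le (Lst - Lprev) i j) HL'.
  have hN : `|Nst i j| <= nu := entry_le Nst i j.
  set a := (Lst - Lprev) i j + Nst i j.
  have ha : `|a| <= zeta.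
    apply: le_trans (ler_normD _ _) _.
    rewrite /zeta -/c -/nu mulrDl mul1r; lra.
  have hA : (M - Lprev) i j = Sst i j + a.
    rewrite /a /M !mxE; ring.
  have hSt : St i j = if zeta < `|Sst i j + a| then Sst i j + a else 0.
    by rewrite /St /hard_thr mxE hA.
  have z0 : 0 <= zeta := le_trans (normr_ge0 _) ha.
  rewrite hSt; case: (eqVneq (Sst i j) 0) => [->|Snz].
    by rewrite (add0r a) ltNge ha /= subr0 normr0 eqxx; split=> //; rewrite mulr_ge0.
  split; last by [].
  case: ifP => hz.
    rewrite opprD addrA subrr add0r normrN; lra.
  rewrite subr0; move/negbT: hz; rewrite -leNgt => hz.
  have : `|Sst i j| <= `|Sst i j + a| + `|a|.
    by rewrite -[X in `|X|](addrK a) ler_normB.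
  lra.
split.
  apply: bmax_le.
    have n0 : (0 < n)%N by apply: leq_trans dn; apply: leq_trans rd.
    have := le_trans (normr_ge0 _) (key (Ordinal n0) (Ordinal n0)).1.
    rewrite /zeta -/c -/nu; lra.
  move=> i; apply: bmax_le.
    have := le_trans (normr_ge0 _) (key i i).1.
    rewrite /zeta -/c -/nu; lra.
  move=> j; have -> : (Sst - St) i j = Sst i j - St i j by rewrite !mxE.
  apply: le_trans (key i j).1 _.
  rewrite /zeta -/c -/nu; lra.
move=> [i j] /=; rewrite /supp /= => H; exact: (key i j).2.
Qed.
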